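(* Let $F : L_n \to \Delta K$ be a non-degenerate $2$-filtration and $p$ a path in $L_n$. Suppose simplex $\sigma$ is added to the 1-filtration induced by $p$ at the step $(i,j)\to(i+\delta_i,j+\delta_j)$, simplex $\tau$ is added at the step $(k,l)\to(k+\delta_k,l+\delta_l)$, and $\sigma$ and $\tau$ are paired in this 1-filtration. Then $\sigma$ and $\tau$ are paired in the 1-filtration induced by every path that takes these two steps.
   Context: $K$ is a finite simplicial complex, coefficients in a field. $L_n=\{0,\dots,n\}^2$ with product order, $\bot=(0,0)$, $\top=(n,n)$. A $2$-filtration is a monotone map $F$ from $L_n$ to subcomplexes of $K$ with $F(\bot)=\emptyset$, $F(\top)=K$. Lower corners of a simplex are the minimal elements of the upset of grades where it is present; $F$ is non-degenerate if any two distinct lower corners differ in both coordinates. A path is a sequence of grades $(0,0)=g_0,\dots,g_{2n}=(n,n)$ where each step $g_s\to g_{s+1}$ adds $(1,0)$ or $(0,1)$ (so $\delta$'s above are in $\{0,1\}$ with exactly one equal to $1$); it induces the 1-filtration $s\mapsto F(g_s)$, and a simplex is added at the step $g_s\to g_{s+1}$ if it lies in $F(g_{s+1})\setminus F(g_s)$ (by non-degeneracy at most one simplex per step). Two simplices are paired in such a 1-filtration if they form a pair of the standard persistence pairing (the negative simplex kills the class created by the positive one; equivalently via the lowest nonzero entries of a reduced matrix $R=DV$). *)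

(* Defs.v *)
From mathcomp Require Import all_boot all_order all_algebra.
Set Implicit Arguments. Unset Strict Implicit. Unset Printing Implicit Defensive.
Import GRing.Theory.
Local Open Scope ring_scope.

(* Grades of L_n are pairs (i,j) : nat * nat with i,j <= n; a 2-filtration is
   given as a map on nat*nat of which only the values on L_n matter. *)

Definition simplex_set (N : nat) := {set {set 'I_N}}.

Definition simplicial_complex (N : nat) (K : simplex_set N) : Prop :=
  set0 \notin K /\
  (forall s t : {set 'I_N}, s \in K -> t \subset s -> t != set0 -> t \in K).

Definition subcomplex (N : nat) (L K : simplex_set N) : Prop :=
  L \subset K /\
  (forall s t : {set 'I_N}, s \in L -> t \subset s -> t != set0 -> t \in L).

Definition in_box (n : nat) (g : nat * nat) : bool := ((g.1 <= n) && (g.2 <= n))%N.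
Definition gle (g h : nat * nat) : bool := ((g.1 <= h.1) && (g.2 <= h.2))%N.

Definition two_filtration (N n : nat) (K : simplex_set N)
  (F : nat * nat -> simplex_set N) : Prop :=
  (forall g, in_box n g -> subcomplex (F g) K) /\
  (forall g h, in_box n g -> in_box n h -> gle g h -> F g \subset F h) /\
  F (0, 0)%N = set0 /\ F (n, n) = K.

Definition lower_corner (N n : nat) (F : nat * nat -> simplex_set N)
  (s : {set 'I_N}) (g : nat * nat) : Prop :=
  in_box n g /\ s \in F g /\
  (forall h, gle h g -> h <> g -> s \notin F h).

Definition non_degenerate (N n : nat) (F : nat * nat -> simplex_set N) : Prop :=
  forall (s t : {set 'I_N}) (g h : nat * nat),
    lower_corner n F s g -> lower_corner n F t h -> (s, g) <> (t, h) ->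
    g.1 <> h.1 /\ g.2 <> h.2.

Definition is_path (n : nat) (p : nat -> nat * nat) : Prop :=
  p 0%N = (0, 0)%N /\ p (2 * n)%N = (n, n) /\
  (forall s, (s < 2 * n)%N ->
     p s.+1 = ((p s).1.+1, (p s).2) \/ p s.+1 = ((p s).1, (p s).2.+1)).

Definition added_at (N n : nat) (F : nat * nat -> simplex_set N)
  (p : nat -> nat * nat) (x : {set 'I_N}) (s : nat) : Prop :=
  (s < 2 * n)%N /\ x \in F (p s.+1) /\ x \notin F (p s).

Definition before (N n : nat) (F : nat * nat -> simplex_set N)
  (p : nat -> nat * nat) (x y : {set 'I_N}) : Prop :=
  exists s t, added_at n F p x s /\ added_at n F p y t /\ (s < t)%N.

(* Boundary matrix coefficient [a : b] (vertices ordered by their index). *)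
Definition bd (k : fieldType) (N : nat) (a b : {set 'I_N}) : k :=
  \sum_(v in b) (if a == b :\ v then (-1) ^+ #|[set w in b | (w < v)%N]| else 0).

Definition is_low (k : fieldType) (N : nat) (K : simplex_set N)
  (bef : {set 'I_N} -> {set 'I_N} -> Prop)
  (R : {set 'I_N} -> {set 'I_N} -> k) (b a : {set 'I_N}) : Prop :=
  a \in K /\ R a b != 0 /\
  (forall a', a' \in K -> a' != a -> R a' b != 0 -> bef a' a).

(* Standard persistence pairing: x (positive) and y (negative) are paired if
   for some upper-triangular invertible V, R = D V is reduced and low_R(y) = x. *)
Definition persistence_pair (k : fieldType) (N n : nat) (K : simplex_set N)
  (F : nat * nat -> simplex_set N) (p : nat -> nat * nat) (x y : {set 'I_N}) : Prop :=
  let bef := before n F p in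
  exists V : {set 'I_N} -> {set 'I_N} -> k,
    let R := fun a b => \sum_(c in K) bd k a c * V c b in
    (forall a b, a \in K -> b \in K -> V a b != 0 -> a = b \/ bef a b) /\
    (forall b, b \in K -> V b b != 0) /\
    (forall b1 b2 a, b1 \in K -> b2 \in K -> b1 != b2 ->
        is_low K bef R b1 a -> is_low K bef R b2 a -> False) /\
    y \in K /\ is_low K bef R y x.

Definition paired (k : fieldType) (N n : nat) (K : simplex_set N)
  (F : nat * nat -> simplex_set N) (p : nat -> nat * nat) (x y : {set 'I_N}) : Prop :=
  persistence_pair k n K F p x y \/ persistence_pair k n K F p y x.

(* Main.v *)
Require Import Defs.
From mathcomp Require Import all_boot all_order all_algebra.
From Stdlib Require Import Classical_Prop.
From mathcomp Require Import fingroup perm ring zify.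
Set Implicit Arguments. Unset Strict Implicit. Unset Printing Implicit Defensive.

Module PA.
Import GRing.Theory.
Local Open Scope ring_scope.

Section LA.
Variable k : fieldType.

Lemma rank_zero_col m n (A : 'M[k]_(m, n)) i j :
  A i j != 0 -> (forall j', j' != j -> A i j' = 0) ->
  \rank A = (\rank (\matrix_(r, c) if c == j then 0 else A r c)).+1.
Proof.
move=> nz zr.
set A' := \matrix_(r, c) _.
rewrite -mxrank_tr -[\rank A']mxrank_tr.
set B := A^T.
set B2 := delta_mx j j *m B.
have eB1 : A'^T = B - B2.
  apply/matrixP => r c; rewrite !mxE /B2.
  rewrite (bigD1 j) //= big1 => [|l /negbTE nl]; last by rewrite !mxE nl andbF mul0r.
  rewrite !mxE !eqxx /= andbT; case: eqP => [->|/eqP ne]; first by rewrite mul1r addr0 subrr.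
  by rewrite mul0r addr0 subr0.
rewrite eB1; set B1 := B - B2.
have B2ji : B2 j i = A i j.
  rewrite /B2 !mxE (bigD1 j) //= big1 => [|l /negbTE nl]; last by rewrite !mxE nl andbF mul0r.
  by rewrite !mxE !eqxx mul1r addr0.
have B1i : forall l, B1 l i = 0.
  move=> l; rewrite /B1 /B2 !mxE (bigD1 j) //= big1 => [|l' /negbTE nl]; last by rewrite !mxE nl andbF mul0r.
  rewrite !mxE !eqxx andbT addr0; case: (eqVneq l j) => [->|nlj]; first by rewrite mul1r subrr.
  by rewrite mul0r subr0 zr.
have rB2 : \rank B2 = 1%N.
  apply/eqP; rewrite eqn_leq; apply/andP; split.
    by apply: leq_trans (mxrankM_maxl _ _) _; rewrite mxrank_delta.
  rewrite lt0n mxrank_eq0; apply/eqP => B20.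
  by move: nz; rewrite -B2ji B20 mxE eqxx.
have sB1 : (B1 <= B)%MS.
  have -> : B1 = (1%:M - delta_mx j j) *m B by rewrite mulmxBl mul1mx.
  exact: submxMl.
have sB2 : (B2 <= B)%MS by apply: submxMl.
have eqS : (B1 + B2 :=: B)%MS.
  apply/eqmxP/andP; split; first by rewrite addsmx_sub sB1 sB2.
  have -> : B = (B1 + B2)%R by rewrite /B1 subrK.
  by apply: addmx_sub_adds.
have nsub : ~~ (B2 <= B1)%MS.
  apply/negP => /submxP [X eX].
  by move: nz; rewrite -B2ji eX !mxE big1 ?eqxx // => l _; rewrite B1i mulr0.
have rC : \rank (B1 :&: B2)%MS = 0%N.
  have := mxrank_leqif_eq (capmxSr B1 B2).
  rewrite rB2 => -[le eqq].
  move: le; rewrite leq_eqVlt ltnS leqn0 => /orP [/eqP h|/eqP //].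
  move: eqq; rewrite h eqxx => /esym/eqmxP eqC.
  by case/negP: nsub; rewrite -eqC capmxSl.
have := mxrank_sum_cap B1 B2; rewrite eqS rC rB2 addn0 addn1 => ->.
by [].
Qed.
End LA.

End PA.
Import PA.

Module PB.
Import GRing.Theory.
Local Open Scope ring_scope.

Lemma det_wtrig (k : fieldType) m (A : 'M[k]_m) (w : 'I_m -> nat) :
  (forall i j, A i j != 0 -> i = j \/ (w i < w j)%N) -> \det A = \prod_i A i i.
Proof.
move=> tri; rewrite /determinant (bigD1 (1%g : {perm 'I_m})) //= [X in _ + X]big1 => [|s ns1].
  by rewrite odd_perm1 expr0 mul1r addr0; apply: eq_bigr => i _; rewrite perm1.
case: (boolP [forall i, A i (s i) != 0]) => [/forallP allnz|].
  exfalso; case/eqP: ns1; apply/permP => i.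
  rewrite perm1; apply/eqP/negPn/negP => nsi.
  have le : forall j, (w j <= w (s j))%N.
    by move=> j; case: (tri _ _ (allnz j)) => [<-|/ltnW].
  have lt : (w i < w (s i))%N by case: (tri _ _ (allnz i)) => [/esym/eqP|//]; rewrite (negbTE nsi).
  have : (\sum_j w j = \sum_j w (s j))%N := reindex_inj (@perm_inj _ s).
  rewrite (bigD1 i) //= [X in _ = X](bigD1 i) //= => /eqP.
  apply/negP; rewrite neq_ltn; apply/orP; left.
  rewrite -addSn; apply: leq_add; first exact: lt.
  by apply: leq_sum => j _; apply: le.
move=> /forallPn [i]; rewrite negbK => /eqP z.
by rewrite (bigD1 i) //= z mul0r mulr0.
Qed.

End PB.
Import PB.

Module PC.
Import GRing.Theory.
Local Open Scope ring_scope.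

Section G.
Variables (k : fieldType) (T : finType).
Definition mx (M : T -> T -> k) : 'M[k]_#|T| := \matrix_(i, j) M (enum_val i) (enum_val j).
Definition lowf (w : T -> nat) (M : T -> T -> k) b := (\max_(a | M a b != 0%R) (w a).+1)%N.

Lemma lowf_ge w M a b : M a b != 0 -> ((w a).+1 <= lowf w M b)%N.
Proof. by move=> nz; apply: (@leq_bigmax_cond _ (fun a => M a b != 0) (fun a => (w a).+1) a nz). Qed.

Lemma lowf_pos w M b : lowf w M b != 0%N -> {a | M a b != 0 & lowf w M b = (w a).+1}.
Proof.
move=> nz; case: (pickP (fun a => M a b != 0)) => [a0 Ha0|none].
  have c0 : (0 < #|(fun a => M a b != 0%R)|)%N by apply/card_gt0P; exists a0.
  by case: (eq_bigmax_cond (fun a => (w a).+1) c0) => a Ha E; exists a.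
by exfalso; move: nz; rewrite /lowf big_pred0.
Qed.

Lemma rank_low (w : T -> nat) (M : T -> T -> k) :
  (forall a a' b b', M a b != 0 -> M a' b' != 0 -> w a = w a' -> a = a') ->
  (forall b1 b2, b1 != b2 -> lowf w M b1 = lowf w M b2 -> lowf w M b1 = 0%N) ->
  \rank (mx M) = #|[set b | lowf w M b != 0%N]|.
Proof.
move: {2}#|_| (erefl #|[set b | lowf w M b != 0%N]|) => c.
elim: c M => [|c IH] M Ec winj dist.
  rewrite (_ : mx M = 0) ?mxrank0 //; apply/matrixP => i j; rewrite !mxE.
  apply/eqP/negPn/negP => nz.
  have := lowf_ge w nz; move/eqP: Ec; rewrite cards_eq0 => /eqP/setP/(_ (enum_val j)).
  by rewrite !inE => /negbFE/eqP ->.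
have : (0 < #|[set b | lowf w M b != 0%N]|)%N by rewrite Ec.
case/card_gt0P => b1; rewrite inE -lt0n => hb1.
have [b0 Eb0] : {b0 | (\max_b lowf w M b)%N = lowf w M b0}.
  by apply: eq_bigmax; apply/card_gt0P; exists b1.
have lb0 : lowf w M b0 != 0%N.
  by rewrite -lt0n -Eb0; apply: leq_trans hb1 (leq_bigmax _).
have [a0 Ma0 Ea0] := lowf_pos lb0.
have zr : forall b, b != b0 -> M a0 b = 0.
  move=> b nb; apply/eqP/negPn/negP => nz.
  have h1 := lowf_ge w nz; have h2 : (lowf w M b <= lowf w M b0)%N by rewrite -Eb0 leq_bigmax.
  have e : lowf w M b = lowf w M b0 by apply/eqP; rewrite eqn_leq h2 Ea0 h1.
  by move: h1; rewrite (dist _ _ nb e).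
pose M' a b := if b == b0 then 0 else M a b.
have lowM' : forall b, lowf w M' b = if b == b0 then 0%N else lowf w M b.
  move=> b; rewrite /lowf /M'; case: eqP => _ //; by rewrite big_pred0 // => a; rewrite eqxx.
rewrite (@rank_zero_col _ _ _ (mx M) (enum_rank a0) (enum_rank b0)); last first.
- by move=> j nj; rewrite mxE enum_rankK zr // -(can_eq enum_rankK) enum_valK.
- by rewrite mxE !enum_rankK.
have -> : (\matrix_(r, c) if c == enum_rank b0 then 0 else mx M r c) = mx M'.
  apply/matrixP => i j; rewrite !mxE /M'.
  by rewrite -(can_eq enum_valK) enum_rankK.
have cM' : #|[set b | lowf w M' b != 0%N]| = c.
  apply/eqP; rewrite -eqSS -Ec.
  rewrite [X in _ == X](cardsD1 b0 [set b | _]) inE lb0 add1n eqSS; apply/eqP/eq_card => b.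
  by rewrite !inE lowM'; case: (b == b0).
rewrite (IH M' cM') ?cM' ?Ec //.
- move=> a a' b b'; rewrite /M'; case: (b == b0); rewrite ?eqxx //; case: (b' == b0); rewrite ?eqxx //; exact: winj.
- move=> c1 c2 nb; rewrite !lowM'.
  case: (c1 == b0) => //; case: (c2 == b0) => //.
  exact: dist.
Qed.
End G.

End PC.
Import PC.

Module PD.
Import GRing.Theory.
Local Open Scope ring_scope.

Section Core.
Variables (k : fieldType) (N : nat).
Local Notation T := {set 'I_N}.
Variables (K : {set T}) (pos : T -> nat) (D : T -> T -> k).
Hypothesis posinj : {in K &, injective pos}.

Definition befc a b := a \in K /\ b \in K /\ (pos a < pos b)%N.
Definition RR (V : T -> T -> k) a b := \sum_(c in K) D a c * V c b.
Definition tri (V : T -> T -> k) := forall a b, a \in K -> b \in K -> V a b != 0 -> a = b \/ befc a b.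
Definition dg (V : T -> T -> k) := forall b, b \in K -> V b b != 0.
Definition red (V : T -> T -> k) := forall b1 b2 a, b1 \in K -> b2 \in K -> b1 != b2 ->
  is_low K befc (RR V) b1 a -> is_low K befc (RR V) b2 a -> False.
Definition lowK V b := (\max_(a | (a \in K) && (RR V a b != 0%R)) (pos a).+1)%N.
Definition meas V := (\sum_(b in K) lowK V b)%N.

Lemma lowK_is_low V b a : is_low K befc (RR V) b a -> lowK V b = (pos a).+1.
Proof.
move=> [aK [nz oth]]; apply/eqP; rewrite eqn_leq; apply/andP; split.
  apply/bigmax_leqP => a' /andP [a'K nz']; case: (eqVneq a' a) => [->//|ne].
  by have [_ [_ /ltnW]] := oth a' a'K ne nz'.
by apply: (@leq_bigmax_cond _ (fun a => (a \in K) && (RR V a b != 0%R)) (fun a => (pos a).+1) a); rewrite aK nz.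
Qed.

Lemma exists_red : exists V, tri V /\ dg V /\ red V.
Proof.
suff main : forall m V, tri V -> dg V -> meas V = m -> exists V, tri V /\ dg V /\ red V.
  apply: (main _ (fun a b => (a == b)%:R)) => //.
    move=> a b _ _ /=; case E: (a == b); first by move/eqP: E => ->; left.
    by rewrite eqxx.
  by move=> b _ /=; rewrite eqxx oner_neq0.
elim/ltn_ind => m IH V trV dgV mV.
case: (Classical_Prop.classic (red V)) => [rV|nrV]; first by exists V.
suff [V' [trV' [dgV' lt']]] : exists V', tri V' /\ dg V' /\ (meas V' < meas V)%N.
  by apply: (IH (meas V') _ V') => //; rewrite -mV.
apply: Classical_Prop.NNPP => nex; apply: nrV.
suff H : forall b1 b2 a, b1 \in K -> b2 \in K -> (pos b1 < pos b2)%N ->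
  is_low K befc (RR V) b1 a -> is_low K befc (RR V) b2 a -> False.
  move=> b1 b2 a K1 K2 ne L1 L2; case: (ltngtP (pos b1) (pos b2)) => h.
  - exact: (H b1 b2 a).
  - exact: (H b2 b1 a).
  - by move/eqP: ne; apply; apply: posinj.
move=> b1 b2 a K1 K2 lt L1 L2.
have [aK [nz1 oth1]] := L1; have [_ [nz2 oth2]] := L2.
pose cst := RR V a b2 / RR V a b1.
pose V' c b := if b == b2 then V c b2 - cst * V c b1 else V c b.
have RV' : forall a' b, RR V' a' b = if b == b2 then RR V a' b2 - cst * RR V a' b1 else RR V a' b.
  move=> a' b; rewrite /RR /V'; case: eqP => _ //.
  rewrite mulr_sumr -sumrB; apply: eq_bigr => c _; ring.
have ne12 : b2 != b1 by apply/eqP => e; move: lt; rewrite e ltnn.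
have lowlt : (lowK V' b2 < lowK V b2)%N.
  rewrite (lowK_is_low L2) ltnS; apply/bigmax_leqP => a' /andP [a'K].
  rewrite RV' eqxx; case: (eqVneq a' a) => [->|ne].
    by rewrite /cst mulrVK ?unitfE // subrr eqxx.
  move=> nz'.
  case: (eqVneq (RR V a' b2) 0) => [z2|nz2'].
    case: (eqVneq (RR V a' b1) 0) => [z1|nz1']; first by move: nz'; rewrite z1 z2 mulr0 subrr eqxx.
    by have [_ [_ ->]] := oth1 a' a'K ne nz1'.
  by have [_ [_ ->]] := oth2 a' a'K ne nz2'.
have trV' : tri V'.
  move=> c b cK bK; rewrite /V'; case E: (b == b2); last exact: trV.
  move/eqP: E => ->.
  case: (eqVneq (V c b2) 0) => [z2|nz2'].
    case: (eqVneq (V c b1) 0) => [z1|nz1']; first by rewrite z1 z2 mulr0 subrr eqxx.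
    move=> _; right; case: (trV c b1 cK K1 nz1') => [->|[_ [_ h]]]; first by [].
    by split => //; split => //; apply: ltn_trans h lt.
  by move=> _; exact: trV.
have dgV' : dg V'.
  move=> b bK; rewrite /V'; case E: (b == b2); last exact: dgV.
  move/eqP: E => ->.
  case: (eqVneq (V b2 b1) 0) => [->|nz]; first by rewrite mulr0 subr0; apply: dgV.
  case: (trV b2 b1 K2 K1 nz) => [e|[_ [_ h]]]; first by move: ne12; rewrite e eqxx.
  by move: lt; rewrite ltnNge (ltnW h).
apply: nex; exists V'; split => //; split => //.
rewrite /meas (bigD1 b2) //= [X in (_ < X)%N](bigD1 b2) //=.
rewrite -addSn leq_add // leq_eqVlt; apply/orP; left; apply/eqP.
apply: eq_bigr => b /andP [_ nb]; rewrite /lowK; apply: eq_bigl => a'.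
by rewrite RV' (negbTE nb).
Qed.

Lemma sum_er (F : 'I_#|T| -> k) : \sum_l F l = \sum_c F (enum_rank c).
Proof. by rewrite (reindex (@enum_rank T)) //; apply: onW_bij; exact: enum_rank_bij. Qed.

Definition mskD (S P : {set T}) a b := if (a \in S) && (b \in P) then D a b else 0.
Definition mskR V (S P : {set T}) a b := if (a \in S) && (b \in P) then RR V a b else 0.

Lemma rk_DR V (S P : {set T}) : tri V -> dg V -> P \subset K ->
  (forall b c, b \in P -> c \in K -> (pos c < pos b)%N -> c \in P) ->
  \rank (mx (mskD S P)) = \rank (mx (mskR V S P)).
Proof.
move=> trV dgV PK dc.
pose W c b := if (c \in P) && (b \in P) then V c b else (c == b)%:R.
have E : mx (mskD S P) *m mx W = mx (mskR V S P).
  apply/matrixP => i j; rewrite mxE sum_er /mx.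
  under eq_bigr do rewrite !mxE !enum_rankK.
  rewrite mxE.
  move: (enum_val i) (enum_val j) => a b.
  rewrite /mskD /mskR /W; case: (boolP (a \in S)) => aS /=; last by rewrite big1 // => c _; rewrite mul0r.
  case: (boolP (b \in P)) => bP /=; last first.
    rewrite big1 // => c _; case: (boolP (c \in P)) => cP /=; last by rewrite mul0r.
    case E: (c == b); last by rewrite mulr0.
    by move/eqP: E cP => ->; rewrite (negbTE bP).
  rewrite /RR [RHS]big_mkcond /=; apply: eq_bigr => c _; rewrite andbT.
  case: (boolP (c \in P)) => cP /=; first by rewrite (subsetP PK _ cP).
  rewrite mul0r; case: (boolP (c \in K)) => cK //.
  case: (eqVneq (V c b) 0) => [->|nz]; first by rewrite mulr0.
  case: (trV c b cK (subsetP PK _ bP) nz) => [e|[_ [_ lt]]]; first by move: cP; rewrite e bP.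
  by move: cP; rewrite (dc b c bP cK lt).
rewrite -E mxrankMfree // row_free_unit unitmxE unitfE.
rewrite (@det_wtrig _ _ _ (fun i => pos (enum_val i))).
  apply/prodf_neq0 => i _; rewrite !mxE /W.
  case: (boolP (enum_val i \in P)) => iP /=; last by rewrite eqxx oner_neq0.
  by apply: dgV; apply: (subsetP PK).
move=> i j; rewrite !mxE /W.
case: (boolP (enum_val i \in P)) => iP; case: (boolP (enum_val j \in P)) => jP /=.
- move=> nz; case: (trV _ _ (subsetP PK _ iP) (subsetP PK _ jP) nz) => [e|[_ [_ lt]]].
    by left; apply: enum_val_inj.
  by right.
all: case E': (enum_val i == enum_val j); last by rewrite eqxx.
all: by move=> _; left; apply: enum_val_inj; apply/eqP; rewrite E'.
Qed.


Definition isl V b a : bool := [&& a \in K, RR V a b != 0 &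
  [forall a', ((a' \in K) && (RR V a' b != 0)) ==> (pos a' <= pos a)%N]].

Lemma isl_iff V b a : is_low K befc (RR V) b a <-> isl V b a.
Proof.
split.
  move=> [aK [nz oth]]; rewrite /isl aK nz; apply/forallP => a'; apply/implyP => /andP [a'K nz'].
  case: (eqVneq a' a) => [->//|ne]; by have [_ [_ /ltnW]] := oth a' a'K ne nz'.
move=> /and3P [aK nz /forallP oth]; split => //; split => // a' a'K ne nz'.
split => //; split => //; have := implyP (oth a') (introT andP (conj a'K nz')).
rewrite leq_eqVlt => /orP [/eqP e|//]; by case/eqP: ne; apply: posinj.
Qed.

Lemma isl_uniq V b a1 a2 : isl V b a1 -> isl V b a2 -> a1 = a2.
Proof.
move=> /and3P [K1 nz1 /forallP o1] /and3P [K2 nz2 /forallP o2]; apply: posinj => //.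
apply/eqP; rewrite eqn_leq; apply/andP; split.
  exact: (implyP (o2 a1) (introT andP (conj K1 nz1))).
exact: (implyP (o1 a2) (introT andP (conj K2 nz2))).
Qed.

Lemma rkR_count V (S P : {set T}) u : red V -> S = [set a in K | (u <= pos a)%N] -> P \subset K ->
  \rank (mx (mskR V S P)) = (\sum_(b in P) \sum_(a in S) (isl V b a : nat))%N.
Proof.
move=> rV ES PK.
have SK : forall a, a \in S -> a \in K by move=> a; rewrite ES inE => /andP [].
have hlow : forall b, lowf pos (mskR V S P) b != 0%N ->
    {a | [/\ a \in S, b \in P & isl V b a] & lowf pos (mskR V S P) b = (pos a).+1}.
  move=> b nz; have [a Ma Ea] := lowf_pos nz; exists a => //.
  move: Ma; rewrite /mskR; case: (boolP (a \in S)) => aS; case: (boolP (b \in P)) => bP /=; rewrite ?eqxx // => nz'.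
  split => //; rewrite /isl (SK _ aS) nz' /=; apply/forallP => a'; apply/implyP => /andP [a'K nza'].
  case: (boolP (a' \in S)) => a'S.
    have := lowf_ge pos (_ : mskR V S P a' b != 0); rewrite Ea ltnS; apply.
    by rewrite /mskR a'S bP.
  have aK := SK _ aS; move: a'S aS; rewrite ES !inE a'K aK /= -ltnNge => h1 h2.
  exact: ltnW (leq_trans h1 h2).
have hisl : forall b a, b \in P -> a \in S -> isl V b a -> lowf pos (mskR V S P) b != 0%N.
  move=> b0 a0 bP aS /and3P [_ nz _]; rewrite -lt0n.
  by apply: leq_trans (lowf_ge pos (_ : mskR V S P a0 b0 != 0)); rewrite // /mskR aS bP.
rewrite (rank_low (w := pos)).
- rewrite -sum1_card [LHS]big_mkcond [RHS]big_mkcond /=; apply: eq_bigr => b _; rewrite inE.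
  case: (eqVneq (lowf pos (mskR V S P) b) 0%N) => [z|nz].
    case: (boolP (b \in P)) => bP //; rewrite big1 // => a aS.
    by case: (boolP (isl V b a)) => // h; move: (hisl b a bP aS h); rewrite z.
  have [a [aS bP ia] _] := hlow b nz; rewrite bP (bigD1 a) //= ia big1 // => a' /andP [_ ne].
  by case: (boolP (isl V b a')) => // h; case/eqP: ne; apply: isl_uniq h ia.
- move=> a a' b b'; rewrite /mskR.
  case: (boolP (a \in S)) => aS; case: (boolP (a' \in S)) => a'S /=; rewrite ?eqxx //.
  by case: (_ \in P); case: (_ \in P); rewrite ?eqxx // => _ _; apply: posinj; apply: SK.
- move=> b1 b2 ne E; apply/eqP/negPn/negP => nz.
  have [a1 [_ b1P i1] E1] := hlow b1 nz.
  have nz2 : lowf pos (mskR V S P) b2 != 0%N by rewrite -E.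
  have [a2 [_ b2P i2] E2] := hlow b2 nz2.
  have e : a1 = a2 by apply: posinj; [case/and3P: i1|case/and3P: i2|apply/eq_add_S; rewrite -E1 -E2].
  subst a2; apply: (rV b1 b2 a1) => //; try exact: (subsetP PK); exact/isl_iff.
Qed.

Lemma char_low V x y : tri V -> dg V -> red V -> x \in K -> y \in K ->
  (isl V y x <->
  (\rank (mx (mskD [set a in K | pos x <= pos a] [set a in K | pos a <= pos y])) +
   \rank (mx (mskD [set a in K | pos x < pos a] [set a in K | pos a < pos y])) =
  (\rank (mx (mskD [set a in K | pos x < pos a] [set a in K | pos a <= pos y])) +
   \rank (mx (mskD [set a in K | pos x <= pos a] [set a in K | pos a < pos y]))).+1)%N).
Proof.
move=> trV dgV rV xK yK.
have sub : forall f : nat -> bool, [set a in K | f (pos a)] \subset K.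
  by move=> f; apply/subsetP => a; rewrite inE => /andP [].
have dc : forall m, forall b c, b \in [set a in K | (pos a < m)%N] -> c \in K -> (pos c < pos b)%N ->
    c \in [set a in K | (pos a < m)%N].
  by move=> m b c; rewrite !inE => /andP [_ h] -> h'; apply: ltn_trans h' h.
rewrite !(rk_DR (V := V)) //; try exact: dc; try exact: (sub (fun i => i < _)%N).
rewrite !(@rkR_count V [set a in K | (pos x <= pos a)%N] _ (pos x)) //; try exact: (sub (fun i => i < _)%N).
rewrite !(@rkR_count V [set a in K | (pos x < pos a)%N] _ (pos x).+1) //; try exact: (sub (fun i => i < _)%N).
set Sx := [set a in K | (pos x <= pos a)%N]; set S'x := [set a in K | (pos x < pos a)%N].
set Py := [set a in K | (pos a <= pos y)%N]; set P'y := [set a in K | (pos a < pos y)%N].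
have hS : forall P : {set T}, (\sum_(b in P) \sum_(a in Sx) (isl V b a : nat) =
    \sum_(b in P) \sum_(a in S'x) (isl V b a : nat) + \sum_(b in P) (isl V b x : nat))%N.
  move=> P; rewrite -big_split; apply: eq_bigr => b _.
  rewrite (bigD1 x) /=; last by rewrite inE xK leqnn.
  rewrite addnC; congr (_ + _)%N; apply: eq_bigl => a; rewrite !inE.
  case: (boolP (a \in K)) => aK //=; rewrite ltn_neqAle andbC; congr (_ && _).
  apply/idP/idP => [ne|ne]; first by apply/eqP => e; case/eqP: ne; apply: posinj.
  by apply/eqP => e; case/eqP: ne; rewrite e.
have hP : (\sum_(b in Py) (isl V b x : nat) = isl V y x + \sum_(b in P'y) (isl V b x : nat))%N.
  rewrite (bigD1 y) /=; last by rewrite inE yK leqnn.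
  congr (_ + _)%N; apply: eq_bigl => b; rewrite !inE.
  case: (boolP (b \in K)) => bK //=; rewrite [in RHS]ltn_neqAle andbC; congr (_ && _).
  apply/idP/idP => [ne|ne]; first by apply/eqP => e; case/eqP: ne; apply: posinj.
  by apply/eqP => e; case/eqP: ne; rewrite e.
rewrite !hS hP; case: (isl V y x); split => //; first by move=> _; rewrite !addnA; lia.
by lia.
all: try exact: (sub (fun i => i <= _)%N).
all: by move=> b c; rewrite !inE => /andP [_ h] -> h'; apply: leq_trans (ltnW h') h.
Qed.

End Core.

End PD.
Import PD.

Module PE.
Import GRing.Theory.

Section Filt.
Variables (N n : nat) (K : {set {set 'I_N}}) (F : nat * nat -> {set {set 'I_N}}).
Hypothesis tf : two_filtration n K F.
Hypothesis nd : non_degenerate n F.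

Lemma gle_refl g : gle g g.
Proof. by rewrite /gle !leqnn. Qed.

Lemma gle_trans g h l : gle g h -> gle h l -> gle g l.
Proof.
by move=> /andP [h1 h2] /andP [l1 l2]; apply/andP; split; [apply: leq_trans h1 l1|apply: leq_trans h2 l2].
Qed.

Lemma path_gle p : is_path n p -> forall s t, (s <= t)%N -> (t <= 2 * n)%N -> gle (p s) (p t).
Proof.
move=> [p0 [pn st]] s t; elim: t => [|t IH].
  by rewrite leqn0 => /eqP -> _; apply: gle_refl.
rewrite leq_eqVlt => /orP [/eqP -> _|lt le]; first exact: gle_refl.
apply: gle_trans (IH lt (ltnW le)) _.
by case: (st t le) => ->; rewrite /gle /= ?leqnSn ?leqnn.
Qed.

Lemma path_box p : is_path n p -> forall s, (s <= 2 * n)%N -> in_box n (p s).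
Proof.
move=> pp s le; have := path_gle pp le (leqnn _); case: pp => [_ [-> _]].
by rewrite /gle /in_box.
Qed.

Lemma path_mono p : is_path n p -> forall s t, (s <= t)%N -> (t <= 2 * n)%N -> F (p s) \subset F (p t).
Proof.
move=> pp s t st tn; case: tf => [_ [mon _]].
apply: mon; [apply: path_box => //; exact: leq_trans st tn|exact: path_box|exact: path_gle].
Qed.

Definition posp (p : nat -> nat * nat) a := (\max_(s < 2 * n | a \notin F (p s)) s)%N.

Lemma FK g a : in_box n g -> a \in F g -> a \in K.
Proof. by case: tf => [sub _] bg aF; case: (sub g bg) => /subsetP H _; apply: H. Qed.

Lemma posp_spec p a s : is_path n p -> a \in K -> (s <= 2 * n)%N ->
  (a \in F (p s)) = (posp p a < s)%N.
Proof.
move=> pp aK sn; have [p0 [pn st]] := pp.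
have [_ [_ [F0 Fn]]] := tf.
have n0 : (0 < 2 * n)%N.
  rewrite lt0n; apply/eqP => e; have n0' : n = 0%N by lia.
  by move: aK; rewrite -Fn n0' F0 inE.
have Fa0 : a \notin F (p (@Ordinal (2 * n) 0 n0)) by rewrite /= p0 F0 inE.
have c0 : (0 < #|(fun s : 'I_(2 * n) => a \notin F (p s))|)%N.
  by apply/card_gt0P; exists (Ordinal n0).
have [s0 s0P Es0] := eq_bigmax_cond (fun s : 'I_(2 * n) => nat_of_ord s) c0.
have ub : forall s' : 'I_(2 * n), a \notin F (p s') -> (s' <= posp p a)%N.
  by move=> s' h; apply: (@leq_bigmax_cond _ (fun s : 'I_(2 * n) => a \notin F (p s)) (fun s => nat_of_ord s) s' h).
rewrite /posp Es0; apply/idP/idP => [aF|lt].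
  rewrite ltnNge; apply/negP => le; move: s0P => /negP; apply.
  by apply: (subsetP (path_mono pp le (ltnW (ltn_ord s0)))).
apply/negPn/negP => naF; move: sn; rewrite leq_eqVlt => /orP [/eqP e|sn].
  by move: naF; rewrite e pn Fn aK.
by have := ub (Ordinal sn) naF; rewrite /posp Es0 /= leqNgt lt.
Qed.

Lemma added_pos p a s : is_path n p -> added_at n F p a s -> a \in K /\ posp p a = s.
Proof.
move=> pp [sn [a1 a0]].
have aK : a \in K by apply: (FK (path_box pp sn) a1).
split => //; move: a1 a0; rewrite !(posp_spec pp aK) //; last exact: ltnW.
by rewrite ltnS -leqNgt => h1 h2; apply/eqP; rewrite eqn_leq h1 h2.
Qed.

Lemma pos_added p a : is_path n p -> a \in K -> added_at n F p a (posp p a).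
Proof.
move=> pp aK; have [_ [pn _]] := pp; have [_ [_ [_ Fn]]] := tf.
have lt : (posp p a < 2 * n)%N by rewrite -(posp_spec pp aK) // pn Fn.
split => //; rewrite !(posp_spec pp aK) ?ltnn //; exact: ltnW.
Qed.

Lemma before_iff p a b : is_path n p -> before n F p a b <-> befc K (posp p) a b.
Proof.
move=> pp; split.
  move=> [s [t [ha [hb lt]]]]; have [aK ea] := added_pos pp ha; have [bK eb] := added_pos pp hb.
  by split => //; split => //; rewrite ea eb.
move=> [aK [bK lt]]; exists (posp p a), (posp p b); split; first exact: pos_added.
by split => //; apply: pos_added.
Qed.

Lemma lc_exists a g : in_box n g -> a \in F g -> exists g', lower_corner n F a g' /\ gle g' g.
Proof.
move: {2}(g.1 + g.2)%N (leqnn (g.1 + g.2)%N) => m; elim: m g => [|m IH] g hm bg aF.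
  case: (classic (exists h, gle h g /\ h <> g /\ a \in F h)) => [[h [hg [ne _]]]|nex].
    exfalso; apply: ne; move: hg hm; case: h => h1 h2; case: g {bg aF} => g1 g2 /andP /= [l1 l2].
    by rewrite leqn0 addn_eq0 => /andP [/eqP e1 /eqP e2]; subst; move: l1 l2; rewrite !leqn0 => /eqP -> /eqP ->.
  exists g; split; last exact: gle_refl; split => //; split => // h hg ne; apply/negP => aFh.
  by apply: nex; exists h.
case: (classic (exists h, gle h g /\ h <> g /\ a \in F h)) => [[h [hg [ne aFh]]]|nex].
  have bh : in_box n h.
    by move: hg bg; rewrite /gle /in_box => /andP [l1 l2] /andP [b1 b2]; rewrite (leq_trans l1 b1) (leq_trans l2 b2).
  have hm' : (h.1 + h.2 <= m)%N.
    move: hg hm ne; case: h {bh aFh} => h1 h2; case: g {bg aF} => g1 g2 /andP /= [l1 l2] hm ne.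
    have : (h1 + h2 < g1 + g2)%N.
      rewrite ltn_neqAle leq_add // andbT; apply/eqP => e; apply: ne; congr pair; lia.
    by move=> h'; rewrite -ltnS; apply: leq_trans h' hm.
  have [g' [lc hg']] := IH h hm' bh aFh; exists g'; split => //; exact: gle_trans hg' hg.
exists g; split; last exact: gle_refl; split => //; split => // h hg ne; apply/negP => aFh.
by apply: nex; exists h.
Qed.

Lemma posp_inj p : is_path n p -> {in K &, injective (posp p)}.
Proof.
move=> pp a b aK bK e; apply: NNPP => ne.
have ha := pos_added pp aK; have hb := pos_added pp bK; rewrite -e in hb.
set s := posp p a in ha hb.
have [sn _] := ha; have [_ [_ st]] := pp.
have corner : forall c, added_at n F p c s -> exists g, lower_corner n F c g /\
    gle g (p s.+1) /\ ~~ gle g (p s).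
  move=> c [_ [c1 c0]]; have [g [lc gs]] := lc_exists (path_box pp sn) c1.
  exists g; split => //; split => //; apply/negP => gps.
  have [bg [cg _]] := lc; case: tf => [_ [mon _]].
  by move: c0; rewrite (subsetP (mon _ _ bg (path_box pp (ltnW sn)) gps) _ cg).
have [ga [lca [ga1 ga0]]] := corner a ha; have [gb [lcb [gb1 gb0]]] := corner b hb.
have neq : (a, ga) <> (b, gb) by case.
have [d1 d2] := nd lca lcb neq.
case: (st s sn) => E; rewrite E in ga1 gb1; move: ga1 gb1 ga0 gb0;
  rewrite /gle /= => /andP [a1 a2] /andP [b1 b2].
- rewrite a2 b2 !andbT -!ltnNge => a3 b3; apply: d1; apply/eqP; rewrite eqn_leq.
  by rewrite (leq_trans a1 b3) (leq_trans b1 a3).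
- rewrite a1 b1 /= -!ltnNge => a3 b3; apply: d2; apply/eqP; rewrite eqn_leq.
  by rewrite (leq_trans a2 b3) (leq_trans b2 a3).
Qed.

Lemma sGe p s : is_path n p -> (s <= 2 * n)%N ->
  [set a in K | (s <= posp p a)%N] = [set a in K | a \notin F (p s)].
Proof.
move=> pp sn; apply/setP => a; rewrite !inE; case: (boolP (a \in K)) => aK //=.
by rewrite (posp_spec pp aK sn) leqNgt.
Qed.

Lemma sLt p s : is_path n p -> (s <= 2 * n)%N ->
  [set a in K | (posp p a < s)%N] = [set a in K | a \in F (p s)].
Proof.
move=> pp sn; apply/setP => a; rewrite !inE; case: (boolP (a \in K)) => aK //=.
by rewrite (posp_spec pp aK sn).
Qed.

Lemma sLe p s : is_path n p -> (s < 2 * n)%N ->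
  [set a in K | (posp p a <= s)%N] = [set a in K | a \in F (p s.+1)].
Proof.
move=> pp sn; apply/setP => a; rewrite !inE; case: (boolP (a \in K)) => aK //=.
by rewrite (posp_spec pp aK sn) ltnS.
Qed.

End Filt.

End PE.
Import PE.

Module PG.
Import GRing.Theory.

Lemma is_low_ext (k : fieldType) N (K : simplex_set N) (b1 b2 : {set 'I_N} -> {set 'I_N} -> Prop) R b a :
  (forall x y, b1 x y <-> b2 x y) -> (is_low (k := k) K b1 R b a <-> is_low K b2 R b a).
Proof.
move=> E; split => [[h1 [h2 h3]]|[h1 [h2 h3]]]; split => //; split => // a' a'K ne nz; apply/E; exact: h3.
Qed.

Lemma transfer (k : fieldType) N n (K : simplex_set N) F p q x y sx sy tx ty :
  two_filtration n K F -> non_degenerate n F -> is_path n p -> is_path n q ->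
  added_at n F p x sx -> added_at n F p y sy ->
  (tx < 2 * n)%N -> q tx = p sx -> q tx.+1 = p sx.+1 ->
  (ty < 2 * n)%N -> q ty = p sy -> q ty.+1 = p sy.+1 ->
  persistence_pair k n K F p x y -> persistence_pair k n K F q x y.
Proof.
move=> tf nd pp pq hx hy txn qx qx1 tyn qy qy1 [V [trV [dgV [redV [yK lowV]]]]].
have injp := posp_inj tf nd pp; have injq := posp_inj tf nd pq.
have [xK ex] := added_pos tf pp hx; have [_ ey] := added_pos tf pp hy.
have [sxn _] := hx; have [syn _] := hy.
have hxq : added_at n F q x tx by case: hx => _ [h1 h2]; split => //; rewrite qx qx1.
have hyq : added_at n F q y ty by case: hy => _ [h1 h2]; split => //; rewrite qy qy1.
have [_ exq] := added_pos tf pq hxq; have [_ eyq] := added_pos tf pq hyq.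
pose D := @bd k N.
have bp := fun a b : {set 'I_N} => before_iff tf a b pp.
have bq := fun a b : {set 'I_N} => before_iff tf a b pq.
have trV' : tri K (posp n F p) V.
  by move=> a b aK bK nz; case: (trV a b aK bK nz) => [->|/bp]; [left|right].
have redV' : red K (posp n F p) D V.
  move=> b1 b2 a K1 K2 ne L1 L2; apply: (redV b1 b2 a K1 K2 ne).
    exact: (is_low_ext K _ _ _ bp).2 L1.
  exact: (is_low_ext K _ _ _ bp).2 L2.
have lowV' : isl K (posp n F p) D V y x.
  by apply/isl_iff => //; apply: (is_low_ext K _ _ _ bp).1.
have E := (char_low injp trV' dgV redV' xK yK).1 lowV'.
rewrite ex ey !(sGe tf pp) ?(sLt tf pp) ?(sLe tf pp) // in E; try exact: ltnW.
rewrite -qx -qx1 -qy -qy1 in E.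
have [W [trW [dgW redW]]] := @exists_red k N K (posp n F q) D injq.
have := (char_low injq trW dgW redW xK yK).2.
rewrite exq eyq !(sGe tf pq) ?(sLt tf pq) ?(sLe tf pq) //; try exact: ltnW.
move=> /(_ E) lowW.
exists W; split.
  by move=> a b aK bK nz; case: (trW a b aK bK nz) => [->|/bq]; [left|right].
split => //; split.
  move=> b1 b2 a K1 K2 ne L1 L2; apply: (redW b1 b2 a K1 K2 ne).
    exact: (is_low_ext K _ _ _ bq).1 L1.
  exact: (is_low_ext K _ _ _ bq).1 L2.
split => //; apply: (is_low_ext K _ _ _ bq).2; exact/isl_iff.
Qed.

End PG.
Import PG.

Theorem mainTheorem6 (k : fieldType) (N n : nat) (K : {set {set 'I_N}})
  (F : nat * nat -> {set {set 'I_N}}) (p q : nat -> nat * nat)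
  (sigma tau : {set 'I_N}) (s1 s2 t1 t2 : nat) :
  simplicial_complex K -> two_filtration n K F -> non_degenerate n F ->
  is_path n p ->
  added_at n F p sigma s1 -> added_at n F p tau s2 ->
  paired k n K F p sigma tau ->
  is_path n q ->
  (t1 < 2 * n)%N -> q t1 = p s1 -> q t1.+1 = p s1.+1 ->
  (t2 < 2 * n)%N -> q t2 = p s2 -> q t2.+1 = p s2.+1 ->
  paired k n K F q sigma tau.
Proof.
move=> _ tf nd pp h1 h2 [P|P] pq t1n q1 q1' t2n q2 q2'.
  by left; apply: (transfer tf nd pp pq h1 h2 t1n q1 q1' t2n q2 q2' P).
by right; apply: (transfer tf nd pp pq h2 h1 t2n q2 q2' t1n q1 q1' P).
Qed.
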